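(* Let $ds^2=\sum_{j,k=0}^3 g_{jk}(\rho,z)\,dy_jdy_k$ be a stationary axisymmetric Lorentzian metric in cylindrical coordinates $(y_0,y_1,y_2,y_3)=(t,\rho,z,\varphi)$ on ${\bf R}^3\times{\bf R}$, with $g_{jk}$ smooth and even in $\rho$, and let $[g^{jk}]_{j,k=0}^3=([g_{jk}]_{j,k=0}^3)^{-1}$. Let $\Delta(\rho,z)=\det[g^{jk}(\rho,z)]_{j,k=1}^3$ and assume the ergosphere $\Delta=0$ is a smooth closed curve in the $(\rho,z)$-plane with $\Delta>0$ outside it and $\Delta<0$ inside it near the curve. Let $\Delta_1(\rho,z)=g^{11}g^{22}-(g^{12})^2$ and assume $\Delta_1=0$ is a smooth closed curve with $\Delta_1>0$ outside it and $\Delta_1<0$ inside it in a neighborhood of the curve. Then every point $(\rho,z)$ with $\Delta_1(\rho,z)=0$ either lies on the curve $\Delta=0$ or lies inside the curve $\Delta=0$.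
   Context: The ergosphere is the set where $g_{00}=0$, equivalently where $\Delta=\det[g^{jk}]_{j,k=1}^3=0$. The curve $\Delta_1=0$ is called the restricted ergosphere. The metric has Lorentz signature $(1,-1,-1,-1)$.
   Formalization: The ergosphere sign hypothesis is reversed: near the curve Δ=0, Δ<0 holds outside it and Δ>0 inside it, in place of Δ>0 outside and Δ<0 inside. This corrects a misprint. *)

(* Defs.v *)
From HB Require Import structures.
From mathcomp Require Import all_boot all_order all_algebra.
From mathcomp Require Import all_classical all_reals all_analysis.
Set Implicit Arguments. Unset Strict Implicit. Unset Printing Implicit Defensive.
Import Order.TTheory GRing.Theory Num.Theory.
Import numFieldNormedType.Exports.
Local Open Scope classical_set_scope.
Local Open Scope ring_scope.

Section Defs.
Variable R : realType.

(* C^oo functions R -> R: belong to a class of everywhere-differentiable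
   functions closed under differentiation. *)
Definition smooth_fun (f : R -> R) : Prop :=
  exists S : set (R -> R), S f /\
    forall h, S h -> (forall x, derivable h x 1) /\ S (derive1 h).

Definition smooth2 (f : R -> R -> R) : Prop :=
  exists S : set (R -> R -> R), S f /\
    forall h, S h ->
      continuous (fun p : R * R => h p.1 p.2) /\
      (forall r z, derivable (fun r' => h r' z) r 1) /\
      (forall r z, derivable (h r) z 1) /\
      S (fun r z => derive1 (fun r' => h r' z) r) /\
      S (fun r z => derive1 (h r) z).

(* Lorentz signature (1,-1,-1,-1) of a symmetric 4x4 matrix (Sylvester). *)
Definition minkowski_diag : 'M[R]_4 :=
  diag_mx (\row_(i < 4) (if i == ord0 then 1 else -1)).

Definition lorentzian (A : 'M[R]_4) : Prop :=
  A^T = A /\ exists P : 'M[R]_4, P \in unitmx /\ P^T *m A *m P = minkowski_diag.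

(* indices y_1 = rho, y_2 = z *)
Definition i1 : 'I_4 := lift ord0 (ord0 : 'I_3).
Definition i2 : 'I_4 := lift ord0 (lift ord0 (ord0 : 'I_2)).

Definition ginv (g : R -> R -> 'M[R]_4) (r z : R) : 'M[R]_4 := invmx (g r z).

Definition Delta (g : R -> R -> 'M[R]_4) (r z : R) : R :=
  \det (\matrix_(i < 3, j < 3) ginv g r z (lift ord0 i) (lift ord0 j)).

Definition Delta1 (g : R -> R -> 'M[R]_4) (r z : R) : R :=
  ginv g r z i1 i1 * ginv g r z i2 i2 - (ginv g r z i1 i2) ^+ 2.

Definition smooth_closed_curve (C : set (R * R)) : Prop :=
  exists (x y : R -> R) (T : R),
    0 < T /\ smooth_fun x /\ smooth_fun y /\
    (forall t, x (t + T) = x t /\ y (t + T) = y t) /\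
    (forall s t, 0 <= s < T -> 0 <= t < T -> (x s, y s) = (x t, y t) -> s = t) /\
    (forall t, derive1 x t != 0 \/ derive1 y t != 0) /\
    C = [set p | exists t, p = (x t, y t)].

(* p is outside C: p is not on C and lies in the unbounded part of the
   complement of C (it can be joined to arbitrarily far points by a
   path avoiding C). *)
Definition outside (C : set (R * R)) (p : R * R) : Prop :=
  ~ C p /\ forall M : R, exists c : R -> R * R,
    continuous c /\ c 0 = p /\ M < `|(c 1).1| + `|(c 1).2| /\
    forall t, 0 <= t <= 1 -> ~ C (c t).

Definition inside (C : set (R * R)) (p : R * R) : Prop :=
  ~ C p /\ ~ outside C p.

End Defs.

(* Main.v *)
Require Import Defs.
From HB Require Import structures.
From mathcomp Require Import all_boot all_order all_algebra.
From mathcomp Require Import all_classical all_reals all_analysis.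
From mathcomp Require Import ring lra.
Import Order.TTheory GRing.Theory Num.Theory.
Import numFieldNormedType.Exports.
Local Open Scope classical_set_scope.
Local Open Scope ring_scope.
Set Implicit Arguments. Unset Strict Implicit. Unset Printing Implicit Defensive.
Section LA.
Variable R : realType.

Definition k1 : 'I_3 := lift ord0 ord0.
Definition k2 : 'I_3 := lift ord0 (lift ord0 ord0).
Definition i3 : 'I_4 := lift ord0 (lift ord0 (lift ord0 ord0)).

Lemma det33 (A : 'M[R]_3) : \det A =
  A ord0 ord0 * (A k1 k1 * A k2 k2 - A k1 k2 * A k2 k1)
  - A ord0 k1 * (A k1 ord0 * A k2 k2 - A k1 k2 * A k2 ord0)
  + A ord0 k2 * (A k1 ord0 * A k2 k1 - A k1 k1 * A k2 ord0).
Proof.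
rewrite (expand_det_row _ 0) !big_ord_recl big_ord0 /cofactor.
rewrite !(expand_det_row _ 0) !big_ord_recl !big_ord0 /cofactor.
rewrite ![\det _]det_mx11 ?mxE /=.
set B := fun i j : nat => A (inord i) (inord j).
have E : forall i j : 'I_3, A i j = B i j by move=> i j; rewrite /B !inord_val.
rewrite !E /= /bump /=.
ring.
Qed.

Definition ee (k : 'I_4) : R := if k == ord0 then 1 else -1.
Definition qf (x y : 'I_4 -> R) : R := \sum_k ee k * x k * y k.

Lemma qfE x y : qf x y = x ord0 * y ord0 - x i1 * y i1 - x i2 * y i2 - x i3 * y i3.
Proof. rewrite /qf !big_ord_recl big_ord0 /ee /=; ring. Qed.

Lemma qfC x y : qf x y = qf y x.
Proof. by rewrite !qfE; ring. Qed.

Lemma qf_lin x u v a b : qf x (fun k => a * u k - b * v k) = a * qf x u - b * qf x v.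
Proof. rewrite !qfE; ring. Qed.

Lemma null_orth x y : 0 < qf x x -> qf x y = 0 -> qf y y = 0 -> forall k, y k = 0.
Proof.
rewrite !qfE => h1 h2 h3.
set x0 := x ord0 in h1 h2 h3 *; set x1 := x i1 in h1 h2 h3 *;
set x2 := x i2 in h1 h2 h3 *; set x3 := x i3 in h1 h2 h3 *.
set y0 := y ord0 in h1 h2 h3 *; set y1 := y i1 in h1 h2 h3 *;
set y2 := y i2 in h1 h2 h3 *; set y3 := y i3 in h1 h2 h3 *.
have ey0 : x0 * y0 = x1 * y1 + x2 * y2 + x3 * y3 by lra.
have ey1 : y0 ^+ 2 = y1 ^+ 2 + y2 ^+ 2 + y3 ^+ 2 by rewrite !expr2; lra.
have lag : (x1 * y1 + x2 * y2 + x3 * y3) ^+ 2 + ((x1*y2 - x2*y1)^+2 + (x1*y3-x3*y1)^+2 + (x2*y3-x3*y2)^+2)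
   = (x1^+2 + x2^+2 + x3^+2) * (y1^+2 + y2^+2 + y3^+2) by ring.
have cs : (x0 * y0) ^+ 2 <= (x1^+2 + x2^+2 + x3^+2) * y0 ^+ 2.
  rewrite ey0 ey1 -lag lerDl; rewrite !addr_ge0 // sqr_ge0 //.
have hx : x1^+2 + x2^+2 + x3^+2 < x0 ^+ 2 by rewrite !expr2; lra.
have y00 : y0 = 0.
  apply/eqP; rewrite -sqrf_eq0; apply/eqP.
  have : (x0 ^+ 2 - (x1^+2 + x2^+2 + x3^+2)) * y0 ^+ 2 <= 0.
    by rewrite mulrBl -exprMn; lra.
  rewrite pmulr_rle0 ?subr_gt0 // => h.
  by apply/eqP; rewrite eq_le h sqr_ge0.
have sy : y1^+2 + y2^+2 + y3^+2 = 0 by rewrite -ey1 y00 expr0n.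
have y10 : y1 = 0 by apply/eqP; rewrite -sqrf_eq0; apply/eqP; nra.
have y20 : y2 = 0 by apply/eqP; rewrite -sqrf_eq0; apply/eqP; nra.
have y30 : y3 = 0 by apply/eqP; rewrite -sqrf_eq0; apply/eqP; nra.
move=> k; have : k = ord0 \/ k = i1 \/ k = i2 \/ k = i3.
  case: k => [[|[|[|[|m]]]] hm].
  - by left; apply/val_inj.
  - by right; left; apply/val_inj.
  - by right; right; left; apply/val_inj.
  - by right; right; right; apply/val_inj.
  - by [].
by case=> [->|[->|[->|->]]].
Qed.
End LA.
Section LB.
Variable R : realType.

Lemma lor_inv (g0 P : 'M[R]_4) : P \in unitmx -> P^T *m g0 *m P = minkowski_diag R ->
  invmx g0 = P *m minkowski_diag R *m P^T.
Proof.
move=> Pu hP.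
have ee1 : minkowski_diag R *m minkowski_diag R = 1%:M.
  rewrite /minkowski_diag mulmx_diag -diag_const_mx; congr diag_mx.
  by apply/matrixP => i j; rewrite !mxE; case: (j == ord0); rewrite ?mulr1 ?mulrNN ?mulr1.
have h1 : P^T *m g0 = minkowski_diag R *m invmx P.
  by rewrite -hP -mulmxA (mulmxV Pu) mulmx1.
have h2 : P *m minkowski_diag R *m P^T *m g0 = 1%:M.
  by rewrite -mulmxA h1 !mulmxA -(mulmxA P) ee1 mulmx1 (mulmxV Pu).
have [_ gu] := mulmx1_unit h2.
by rewrite -[LHS]mul1mx -h2 -[_ *m invmx g0]mulmxA (mulmxV gu) mulmx1.
Qed.

Lemma invE (P : 'M[R]_4) a b : (P *m minkowski_diag R *m P^T) a b = qf (P a) (P b).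
Proof.
rewrite /minkowski_diag mul_mx_diag !mxE /qf; apply: eq_bigr => k _.
by rewrite !mxE /ee; ring.
Qed.

Lemma nonpos_diag (P : 'M[R]_4) (a b : 'I_4) : P \in unitmx -> a != b ->
  qf (P a) (P a) * qf (P b) (P b) = qf (P a) (P b) ^+ 2 -> qf (P a) (P a) <= 0.
Proof.
move=> Pu ab heq; rewrite leNgt; apply/negP => hpos.
set haa := qf (P a) (P a) in heq hpos *.
set hab := qf (P a) (P b) in heq.
set hbb := qf (P b) (P b) in heq.
pose y := fun k => hab * P a k - haa * P b k.
have qxy : qf (P a) y = 0 by rewrite /y qf_lin -/haa -/hab; ring.
have qyy : qf y y = 0.
  rewrite {2}/y qf_lin (qfC y (P a)) qxy (qfC y (P b)) /y qf_lin -/hbb (qfC (P b) (P a)) -/hab.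
  rewrite expr2 in heq; rewrite -heq; ring.
have y0 := null_orth hpos qxy qyy.
pose v : 'rV[R]_4 := \row_k (if k == a then hab else if k == b then - haa else 0).
have vP : v *m P = 0.
  apply/matrixP => i k; rewrite !mxE (bigD1 a) //= (bigD1 b) /=; last by rewrite eq_sym.
  rewrite big1; last by move=> j /andP[ja jb]; rewrite !mxE (negbTE ja) (negbTE jb) mul0r.
  rewrite !mxE !eqxx (eq_sym b a) (negbTE ab).
  by rewrite addr0 mulNr; exact: (y0 k).
have : v = 0 by rewrite -[v]mulmx1 -(mulmxV Pu) mulmxA vP mul0mx.
move/matrixP=> /(_ 0 b); rewrite !mxE eq_sym (negbTE ab) eqxx => /eqP.
by rewrite oppr_eq0 => /eqP h; rewrite h ltxx in hpos.
Qed.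

Lemma Delta_ge0_of (g0 : 'M[R]_4) : lorentzian g0 ->
  invmx g0 i1 i1 * invmx g0 i2 i2 - invmx g0 i1 i2 ^+ 2 = 0 ->
  0 <= \det (\matrix_(i < 3, j < 3) invmx g0 (lift ord0 i) (lift ord0 j)).
Proof.
move=> [_ [P [Pu hP]]]; rewrite (lor_inv Pu hP) => h0.
set M := P *m minkowski_diag R *m P^T in h0 *.
have E : forall i j : 'I_3, (\matrix_(i < 3, j < 3) M (lift ord0 i) (lift ord0 j)) i j = M (lift ord0 i) (lift ord0 j).
  by move=> i j; rewrite mxE.
rewrite det33 !E /M !invE in h0 *.
rewrite -/i1 -/i2 -/i3.
rewrite (qfC (P i2) (P i1)) (qfC (P i3) (P i1)) (qfC (P i3) (P i2)).
set a := qf (P i1) (P i1) in h0 *; set b := qf (P i2) (P i2) in h0 *.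
set c := qf (P i1) (P i2) in h0 *; set d := qf (P i1) (P i3).
set e := qf (P i2) (P i3); set f := qf (P i3) (P i3).
have hab : a * b = c ^+ 2 by apply/eqP; rewrite -subr_eq0 h0.
have a0 : a <= 0 by apply: (nonpos_diag Pu (_ : i1 != i2)).
have b0 : b <= 0.
  apply: (nonpos_diag Pu (_ : i2 != i1)) => //.
  by rewrite -/a -/b (qfC (P i2) (P i1)) -/c mulrC.
have -> : a * (b * f - e * e) - c * (c * f - e * d) + d * (c * e - b * d)
   = - (a * e ^+ 2 - 2 * c * d * e + b * d ^+ 2) + (a * b - c ^+ 2) * f by ring.
rewrite hab subrr mul0r addr0.
rewrite oppr_ge0.
have [az|an] := eqVneq a 0.
  have c0 : c = 0 by apply/eqP; rewrite -sqrf_eq0 -hab az mul0r.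
  rewrite az c0 mul0r mulr0 !mul0r subrr add0r; apply: mulr_le0_ge0 => //; exact: sqr_ge0.
have alt : a < 0 by rewrite lt_neqAle an a0.
have key : a * (a * e ^+ 2 - 2 * c * d * e + b * d ^+ 2) = (a * e - c * d) ^+ 2.
  have -> : a * (a * e ^+ 2 - 2 * c * d * e + b * d ^+ 2) = (a * e - c * d) ^+ 2 + (a * b - c ^+ 2) * d ^+ 2 by ring.
  by rewrite hab subrr mul0r addr0.
rewrite -(nmulr_rge0 _ alt) key; exact: sqr_ge0.
Qed.
End LB.
Section Topo.
Variable R : realType.
Variable D : R -> R -> R.
Variable C : set (R * R).
Hypothesis hDeven : forall r z, D (- r) z = D r z.
Hypothesis hDC : forall r z, r != 0 -> (D r z = 0 <-> C (r, z)).
Hypothesis hDcont : forall p : R * R, p.1 != 0 ->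
  (D q.1 q.2) @[q --> p] --> D p.1 p.2.
Hypothesis hCopen : forall p, ~ C p -> exists2 e, 0 < e &
  forall q : R * R, `|q.1 - p.1| < e -> `|q.2 - p.2| < e -> ~ C q.

Lemma Dpath_cont (f1 f2 : R -> R) t : f1 s @[s --> t] --> f1 t ->
  f2 s @[s --> t] --> f2 t -> f1 t != 0 ->
  D (f1 s) (f2 s) @[s --> t] --> D (f1 t) (f2 t).
Proof.
move=> h1 h2 h0.
exact: (cvg_comp _ (fun x => D x.1 x.2) (cvg_pair h1 h2) (hDcont (p := (f1 t, f2 t)) h0)).
Qed.

Lemma path_same (f1 f2 : R -> R) : continuous f1 -> continuous f2 ->
  (forall t, 0 <= t <= 1 -> f1 t != 0 /\ ~ C (f1 t, f2 t)) ->
  0 < D (f1 0) (f2 0) * D (f1 1) (f2 1).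
Proof.
move=> c1 c2 hc.
set h := fun t => D (f1 t) (f2 t).
have hnz : forall t, 0 <= t <= 1 -> h t != 0.
  move=> t /hc [h1 h2]; apply/eqP => /(hDC _ h1); exact: h2.
have hcont : {within `[0, 1], continuous h}.
  apply: continuous_in_subspaceT => t; rewrite inE /= in_itv /= => ht.
  have [n0 _] := hc t ht.
  exact: Dpath_cont (c1 t) (c2 t) n0.
rewrite ltNge; apply/negP => hle.
have {}hle : h 0 * h 1 <= 0 := hle.
have i0 : (0 <= (0 : R)) && ((0 : R) <= 1) by rewrite lexx ler01.
have i1 : (0 <= (1 : R)) && ((1 : R) <= 1) by rewrite lexx ler01.
have hmm : Num.min (h 0) (h 1) <= 0 <= Num.max (h 0) (h 1).
  have n0 := hnz 0 i0; have n1 := hnz 1 i1.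
  rewrite ge_min le_max.
  case: (ltrgtP (h 0) 0) => [a|a|a]; last by rewrite a eqxx in n0.
    by have -> : 0 <= h 1 by nra.
  by have -> : h 1 <= 0 by nra.
have [c cin hc0] := IVT ler01 hcont hmm.
move: cin; rewrite in_itv /= => /hnz; by rewrite hc0 eqxx.
Qed.

Lemma aff_cont (a c : R) : continuous (fun t : R => a + t * c).
Proof.
move=> t.
have h1 : (fun s : R => s * c) @ t --> t * c.
  by apply: cvgMl; exact: cvg_id.
exact: (cvgD (cvg_cst a) h1).
Qed.

Lemma seg_same (a b : R * R) :
  (forall t, 0 <= t <= 1 -> (a.1 + t * (b.1 - a.1)) != 0 /\ ~ C (a.1 + t * (b.1 - a.1), a.2 + t * (b.2 - a.2))) ->
  0 < D a.1 a.2 * D b.1 b.2.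
Proof.
move=> h; have := path_same (@aff_cont a.1 (b.1 - a.1)) (@aff_cont a.2 (b.2 - a.2)) h.
by rewrite !mul0r !addr0 !mul1r !(addrC a.1) !(addrC a.2) !subrK.
Qed.

Lemma tbound (t u e : R) : 0 <= t <= 1 -> `|u| < e -> `|t * u| < e.
Proof.
move=> /andP[t0 t1] hu; rewrite normrM (ger0_norm t0).
apply: le_lt_trans hu; exact: ler_piMl.
Qed.

Definition Pos (x : R * R) := exists2 e, 0 < e & forall q : R * R, q.1 != 0 ->
  `|q.1 - x.1| < e -> `|q.2 - x.2| < e -> 0 < D q.1 q.2.
Definition Neg (x : R * R) := exists2 e, 0 < e & forall q : R * R, q.1 != 0 ->
  `|q.1 - x.1| < e -> `|q.2 - x.2| < e -> D q.1 q.2 < 0.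

Lemma Kgen x : ~ C x -> exists2 q0 : R * R, D q0.1 q0.2 != 0 & exists2 e, 0 < e &
  forall q : R * R, q.1 != 0 -> `|q.1 - x.1| < e -> `|q.2 - x.2| < e ->
  0 < D q0.1 q0.2 * D q.1 q.2.
Proof.
move=> nx; have [e0 e0p he0] := hCopen nx.
case: (eqVneq x.1 0) => [x0|xn].
  have e2p : 0 < e0 / 2 by rewrite divr_gt0.
  exists (e0 / 2, x.2) => /=.
    apply/eqP => /(hDC _ (lt0r_neq0 e2p)); apply: he0 => /=; last by rewrite subrr normr0.
    by rewrite x0 subr0 gtr0_norm // ltr_pdivrMr // ltr_pMr // ltr1n.
  exists e0 => // q qn h1 h2.
  have -> : D q.1 q.2 = D `|q.1| q.2.
    case: (ltrP q.1 0) => qs; first by rewrite (ltr0_norm qs) hDeven.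
    by rewrite (ger0_norm qs).
  apply: (seg_same (a := (e0 / 2, x.2)) (b := (`|q.1|, q.2))) => t ht /=.
  rewrite x0 subr0 in h1.
  have qp : 0 < `|q.1| by rewrite normr_gt0.
  have [t0 t1] : 0 <= t /\ t <= 1 by move/andP: ht.
  have pp : 0 < e0 / 2 + t * (`|q.1| - e0 / 2).
    case: (lerP (e0 / 2) `|q.1|) => hh; first nra.
    nra.
  split; first by rewrite gt_eqF.
  apply: he0 => /=; rewrite ?x0 ?subr0.
    rewrite gtr0_norm //; nra.
  by rewrite addrAC subrr add0r; apply: tbound.
exists x.
  by apply/eqP => /(hDC _ xn); rewrite -surjective_pairing.
exists (Num.min e0 `|x.1|); first by rewrite lt_min e0p normr_gt0.
move=> q qn; rewrite !lt_min => /andP[h1a h1b] /andP[h2a h2b].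
apply: seg_same => t ht /=.
have d1 : `|x.1 + t * (q.1 - x.1) - x.1| < Num.min e0 `|x.1|.
  by rewrite addrAC subrr add0r; apply: tbound => //; rewrite lt_min h1a h1b.
rewrite lt_min in d1; case/andP: d1 => d1a d1b.
split.
  by apply/eqP => h0; rewrite h0 sub0r normrN ltxx in d1b.
by apply: he0 => //=; rewrite addrAC subrr add0r; apply: tbound.
Qed.

Lemma Kcase x : ~ C x -> Pos x \/ Neg x.
Proof.
move=> /Kgen [q0 nz [e ep he]].
case: (ltrP 0 (D q0.1 q0.2)) => hs.
  left; exists e => // q qn h1 h2; have := he q qn h1 h2.
  by rewrite pmulr_rgt0.
right; exists e => // q qn h1 h2; have := he q qn h1 h2.
have hs' : D q0.1 q0.2 < 0 by rewrite lt_neqAle nz hs.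
by rewrite nmulr_rgt0.
Qed.

Lemma PosNeg x : Pos x -> Neg x -> False.
Proof.
case: x => x1 x2 [e1 e1p h1] [e2 e2p h2]; rewrite /= in h1 h2.
pose m := Num.min e1 e2.
have mp : 0 < m by rewrite lt_min e1p e2p.
have [q1 [qn hq1]] : exists q1 : R, q1 != 0 /\ `|q1 - x1| < m.
  case: (eqVneq x1 0) => [->|xn]; last by exists x1; rewrite subrr normr0.
  exists (m / 2); split; first by apply: lt0r_neq0; rewrite divr_gt0.
  by rewrite subr0 gtr0_norm ?divr_gt0 // ltr_pdivrMr // ltr_pMr // ltr1n.
have hq2 : `|x2 - x2| < m by rewrite subrr normr0.
move: hq1 hq2; rewrite !lt_min => /andP[a1 a2] /andP[b1 b2].
have := h1 (q1, x2) qn a1 b1; have := h2 (q1, x2) qn a2 b2; move=> u v.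
by have := lt_trans u v; rewrite ltxx.
Qed.

Lemma Pos_near x y e : (forall q : R * R, q.1 != 0 ->
  `|q.1 - x.1| < e -> `|q.2 - x.2| < e -> 0 < D q.1 q.2) -> 0 < e ->
  `|y.1 - x.1| < e / 2 -> `|y.2 - x.2| < e / 2 -> Pos y.
Proof.
move=> h ep h1 h2; exists (e / 2); first by rewrite divr_gt0.
move=> q qn q1 q2; apply: h => //.
  rewrite -(subrK y.1 q.1) -addrA (splitr e); apply: (le_lt_trans (ler_normD _ _)).
  exact: ltrD.
rewrite -(subrK y.2 q.2) -addrA (splitr e); apply: (le_lt_trans (ler_normD _ _)).
exact: ltrD.
Qed.

Lemma Neg_near x y e : (forall q : R * R, q.1 != 0 ->
  `|q.1 - x.1| < e -> `|q.2 - x.2| < e -> D q.1 q.2 < 0) -> 0 < e ->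
  `|y.1 - x.1| < e / 2 -> `|y.2 - x.2| < e / 2 -> Neg y.
Proof.
move=> h ep h1 h2; exists (e / 2); first by rewrite divr_gt0.
move=> q qn q1 q2; apply: h => //.
  rewrite -(subrK y.1 q.1) -addrA (splitr e); apply: (le_lt_trans (ler_normD _ _)).
  exact: ltrD.
rewrite -(subrK y.2 q.2) -addrA (splitr e); apply: (le_lt_trans (ler_normD _ _)).
exact: ltrD.
Qed.


Lemma path_pos (f1 f2 : R -> R) : continuous f1 -> continuous f2 ->
  (forall t, 0 <= t <= 1 -> ~ C (f1 t, f2 t)) ->
  Pos (f1 0, f2 0) -> Pos (f1 1, f2 1).
Proof.
move=> c1 c2 hc p0; case: (pselect (Pos (f1 1, f2 1))) => // p1n.
exfalso.
pose phi t : R := if `[< Pos (f1 t, f2 t) >] then 1 else 0.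
have loc : forall t : R, 0 <= t <= 1 -> \forall s \near t, phi s = phi t.
  move=> t ht; case: (Kcase (hc t ht)) => [[e ep he]|[e ep he]].
    have e2 : 0 < e / 2 by rewrite divr_gt0.
    have Pt : Pos (f1 t, f2 t) by exists e.
    near=> s.
    have Ps : Pos (f1 s, f2 s).
      apply: (Pos_near he ep) => /=; rewrite distrC.
        by near: s; exact: (cvgr_dist_lt _ _ (c1 t) _ e2).
      by near: s; exact: (cvgr_dist_lt _ _ (c2 t) _ e2).
    by rewrite /phi (asboolT Ps) (asboolT Pt).
  have e2 : 0 < e / 2 by rewrite divr_gt0.
  have Nt : Neg (f1 t, f2 t) by exists e.
  have Pt : ~ Pos (f1 t, f2 t) by move=> Pt; exact: (PosNeg Pt Nt).
  near=> s.
  have Ns : Neg (f1 s, f2 s).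
    apply: (Neg_near he ep) => /=; rewrite distrC.
      by near: s; exact: (cvgr_dist_lt _ _ (c1 t) _ e2).
    by near: s; exact: (cvgr_dist_lt _ _ (c2 t) _ e2).
  have Ps : ~ Pos (f1 s, f2 s) by move=> Ps; exact: (PosNeg Ps Ns).
  by rewrite /phi (asboolF Ps) (asboolF Pt).
have cont : {within `[0, 1], continuous phi}.
  apply: continuous_in_subspaceT => t; rewrite inE /= in_itv /= => ht.
  exact: (cvg_near_cst _ (loc t ht)).
have ph0 : phi 0 = 1 by rewrite /phi (asboolT p0).
have ph1 : phi 1 = 0 by rewrite /phi (asboolF p1n).
have hv : Num.min (phi 0) (phi 1) <= 1 / 2 <= Num.max (phi 0) (phi 1).
  rewrite ph0 ph1 ge_min le_max; apply/andP; split; apply/orP; [right|left]; lra.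
have [c _ hc2] := IVT ler01 cont hv.
move: hc2; rewrite /phi; case: (asboolP _) => _ h; lra.
Unshelve. all: by end_near.
Qed.


Lemma seg_pos (a b : R * R) :
  (forall t, 0 <= t <= 1 -> ~ C (a.1 + t * (b.1 - a.1), a.2 + t * (b.2 - a.2))) ->
  Pos a -> Pos b.
Proof.
move=> h pa.
have := @path_pos _ _ (@aff_cont a.1 (b.1 - a.1)) (@aff_cont a.2 (b.2 - a.2)) h.
rewrite !mul0r !addr0 !mul1r !(addrC a.1) !(addrC a.2) !subrK -!surjective_pairing.
exact.
Qed.

Lemma open_pt (U : set (R * R)) (cs : R * R) : open U -> U cs ->
  exists2 e : R, 0 < e & forall t, `|t| < e -> U (cs.1 + t, cs.2).
Proof.
move=> Uo Ucs.
have hf : (cs.1 + t, cs.2) @[t --> (0:R)] --> cs.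
  have h1 : cs.1 + t @[t --> (0:R)] --> cs.1.
    rewrite -[X in _ --> X]addr0; apply: cvgD; [exact: cvg_cst|exact: cvg_id].
  rewrite [X in _ --> X]surjective_pairing; exact: cvg_pair h1 (cvg_cst _).
have := hf U (Uo _ Ucs).
move/nbhs_ballP => [e ep he]; exists e => // t ht; apply: he.
by rewrite /ball /= sub0r normrN.
Qed.

Lemma outside_neg (K : R) (cs : R * R) (U : set (R * R)) :
  (forall p, C p -> `|p.1| <= K /\ `|p.2| <= K) ->
  C cs -> (forall p, C p -> p.1 <= cs.1) -> 0 <= cs.1 ->
  open U -> C `<=` U ->
  (forall r z, r != 0 -> U (r, z) -> outside C (r, z) -> D r z < 0) ->
  forall p : R * R, p.1 != 0 -> outside C p -> 0 < D p.1 p.2 -> False.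
Proof.
move=> hK hcs hmax hcs0 Uo CU hU p pn [npC hout] Dp.
have [e ep he] := open_pt Uo (CU _ hcs).
pose eps := Num.min (e / 2) 1.
have epsp : 0 < eps by rewrite lt_min ltr01 divr_gt0.
have eps1 : eps <= 1 by rewrite ge_min lexx orbT.
have epse : `|eps| < e.
  have : eps <= e / 2 by rewrite ge_min lexx.
  rewrite gtr0_norm //; lra.
pose w := (cs.1 + eps, cs.2).
have wU : U w := he _ epse.
have w1 : cs.1 < w.1 by rewrite /= ltrDl.
have wn : w.1 != 0 by apply: lt0r_neq0; exact: le_lt_trans hcs0 w1.
have hC1 : forall q : R * R, cs.1 < q.1 -> ~ C q.
  by move=> q hq /hmax hq2; move: hq; rewrite ltNge hq2.
have wC : forall q : R * R, w.1 <= q.1 -> ~ C q.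
  by move=> q hq; apply: hC1; exact: lt_le_trans w1 hq.
have wout : outside C w.
  split; first by apply: wC.
  move=> M; exists (fun t => (w.1 + t * (`|M| + 1), w.2)).
  split.
    move=> t; exact: (cvg_pair (@aff_cont w.1 (`|M| + 1) t) (cvg_cst _)).
  split; first by rewrite mul0r addr0 -surjective_pairing.
  split.
    rewrite /= mul1r.
    have a1 := ler_norm (w.1 + (`|M| + 1)); have a2 := normr_ge0 w.2.
    have a3 := ler_norm M; have a4 : 0 <= w.1 := le_trans hcs0 (ltW w1); lra.
  move=> t /andP[t0 t1]; apply: wC => /=.
  by rewrite lerDl mulr_ge0 // addr_ge0.
have Dw : D w.1 w.2 < 0 by case: w wn wU wout {w1 wC} => a b; exact: hU.
have Nw : Neg w.
  case: (Kcase (wout.1)) => // [[e1 e1p he1]].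
  have := he1 w wn; rewrite !subrr normr0 => /(_ e1p e1p); rewrite ltNge (ltW Dw).
  by [].
have Pp : Pos p.
  case: (Kcase npC) => // [[e1 e1p he1]].
  have := he1 p pn; rewrite !subrr normr0 => /(_ e1p e1p); rewrite ltNge (ltW Dp).
  by [].
have nC1 : forall q : R * R, K < `|q.1| -> ~ C q.
  by move=> q hq /hK [h _]; have := lt_le_trans hq h; rewrite ltxx.
have nC2 : forall q : R * R, K < `|q.2| -> ~ C q.
  by move=> q hq /hK [_ h]; have := lt_le_trans hq h; rewrite ltxx.
have csK : cs.1 <= K by have [h _] := hK _ hcs; exact: le_trans (ler_norm _) h.
have stepA : forall q : R * R, K < q.1 -> Pos q -> Pos w.
  move=> q qK Pq.
  have P1 : Pos (q.1, w.2).
    apply: (seg_pos (a := q)) => // t ht; apply: nC1 => /=.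
    by rewrite subrr mulr0 addr0; exact: lt_le_trans qK (ler_norm _).
  apply: (seg_pos (a := (q.1, w.2))) => // t /andP[t0 t1]; apply: hC1 => /=.
  have : cs.1 < q.1 by exact: le_lt_trans csK qK.
  have : cs.1 < w.1 by [].
  rewrite /w /= => h1 h2.
  case: (lerP q.1 (cs.1 + eps)) => hq.
    have : 0 <= t * (cs.1 + eps - q.1) by rewrite mulr_ge0 // subr_ge0.
    lra.
  have : 0 <= (1 - t) * (q.1 - (cs.1 + eps)) by rewrite mulr_ge0 // subr_ge0 // ltW.
  have -> : q.1 + t * (cs.1 + eps - q.1) = cs.1 + eps + (1 - t) * (q.1 - (cs.1 + eps)) by ring.
  lra.
have stepB : forall q : R * R, K < `|q.2| -> Pos q -> Pos w.
  move=> q qK Pq; apply: (stepA (K + 1, q.2)) => /=; first by rewrite ltrDl.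
  apply: (seg_pos (a := q)) => // t ht; apply: nC2 => /=.
  by rewrite subrr mulr0 addr0.
have stepC : forall q : R * R, q.1 < - K -> Pos q -> Pos w.
  move=> q qK Pq; apply: (stepB (q.1, K + 1)) => /=.
    by apply: lt_le_trans (ler_norm _); rewrite ltrDl.
  apply: (seg_pos (a := q)) => // t ht; apply: nC1 => /=.
  rewrite subrr mulr0 addr0.
  have := ler_norm (- q.1); rewrite normrN; lra.
have [c [cc [c0 [cM cav]]]] := hout (2 * (K + 1)).
have Pc : Pos ((c 1).1, (c 1).2).
  apply: (@path_pos (fun t => (c t).1) (fun t => (c t).2)).
  - move=> t; exact: (cvg_comp _ _ (cc t) cvg_fst).
  - move=> t; exact: (cvg_comp _ _ (cc t) cvg_snd).
  - by move=> t ht; rewrite -surjective_pairing; exact: cav.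
  - by rewrite c0 -surjective_pairing.
have Pw : Pos w.
  case: (ltrP K `|(c 1).2|) => h2; first exact: (stepB ((c 1).1, (c 1).2)).
  have h1 : K + 1 < `|(c 1).1| by lra.
  case: (ltrP 0 (c 1).1) => hs.
    apply: (stepA ((c 1).1, (c 1).2)) => //=.
    by rewrite gtr0_norm // in h1; lra.
  apply: (stepC ((c 1).1, (c 1).2)) => //=.
  by rewrite ler0_norm // in h1; lra.
exact: (PosNeg Pw Nw).
Qed.
End Topo.
Section Curve.
Variable R : realType.

Lemma shift_int (f : R -> R) (T : R) : (forall t, f (t + T) = f t) ->
  forall (k : int) t, f (t + k%:~R * T) = f t.
Proof.
move=> hp.
have hn : forall (n : nat) t, f (t + n%:R * T) = f t.
  elim=> [|n IH] t; first by rewrite mul0r addr0.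
  by rewrite -addn1 natrD mulrDl mul1r addrA hp IH.
case=> n t; first exact: hn.
have -> : (Negz n)%:~R = - (n.+1)%:R :> R by rewrite NegzE mulrNz.
by rewrite -(hn n.+1 (t + - (n.+1)%:R * T)) mulNr addrNK.
Qed.

Lemma per_red (x y : R -> R) (T : R) : 0 < T ->
  (forall t, x (t + T) = x t /\ y (t + T) = y t) ->
  forall t, exists2 s, 0 <= s <= T & x t = x s /\ y t = y s.
Proof.
move=> Tp hp t.
have hx : forall t, x (t + T) = x t by move=> u; case: (hp u).
have hy : forall t, y (t + T) = y t by move=> u; case: (hp u).
set k := Num.floor (t / T).
exists (t + (- k)%:~R * T).
  have h1 := floor_le (t / T); have h2 := floorD1_gt (t / T).
  rewrite -/k in h1 h2; rewrite intrD in h2.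
  rewrite mulrNz mulNr.
  have h1' : k%:~R * T <= t by rewrite -ler_pdivlMr.
  have h2' : t < (k%:~R + 1) * T by rewrite -ltr_pdivrMr.
  rewrite mulrDl mul1r in h2'.
  apply/andP; split; lra.
by rewrite (shift_int hx) (shift_int hy).
Qed.
End Curve.
Section CurveB.
Variable R : realType.

Lemma smooth_cont (f : R -> R) : smooth_fun f -> continuous f.
Proof.
case=> S [Sf H]; have [d _] := H f Sf; move=> t.
apply: differentiable_continuous; apply/derivable1_diffP; exact: d t.
Qed.

Lemma dist_cont (x y : R -> R) (a b : R) : continuous x -> continuous y ->
  continuous (fun t => `|x t - a| + `|y t - b|).
Proof.
move=> cx cy t.
apply: cvgD; apply: cvg_norm; apply: cvgB; first exact: cx.
- exact: cvg_cst.
- exact: cy.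
- exact: cvg_cst.
Qed.

Lemma curve_open (x y : R -> R) (T : R) : 0 < T -> continuous x -> continuous y ->
  (forall t, x (t + T) = x t /\ y (t + T) = y t) ->
  forall p : R * R, ~ (exists t, p = (x t, y t)) -> exists2 e, 0 < e &
  forall q : R * R, `|q.1 - p.1| < e -> `|q.2 - p.2| < e -> ~ (exists t, q = (x t, y t)).
Proof.
move=> Tp cx cy hp p np.
have dc := @dist_cont x y p.1 p.2 cx cy.
have cw : {within `[0, T], continuous (fun t => `|x t - p.1| + `|y t - p.2|)}.
  exact: continuous_subspaceT.
have [t0 t0in hmin] := EVT_min (ltW Tp) cw.
set d0 := `|x t0 - p.1| + `|y t0 - p.2| in hmin.
have d0p : 0 < d0.
  rewrite lt_neqAle addr_ge0 // andbT; apply/eqP => h0.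
  have n1 := normr_ge0 (x t0 - p.1); have n2 := normr_ge0 (y t0 - p.2).
  rewrite /d0 in h0.
  have h1 : `|x t0 - p.1| = 0 by lra.
  have h2 : `|y t0 - p.2| = 0 by lra.
  apply: np; exists t0; move: h1 h2 => /eqP; rewrite normr_eq0 subr_eq0 => /eqP -> /eqP.
  by rewrite normr_eq0 subr_eq0 => /eqP ->; rewrite -surjective_pairing.
exists (d0 / 2); first by rewrite divr_gt0.
move=> q h1 h2 [t qe]; have [s sin [xs ys]] := per_red Tp hp t.
have := hmin s; rewrite in_itv /= => /(_ sin).
rewrite -xs -ys; rewrite qe /= in h1 h2 => h; lra.
Qed.

Lemma curve_bound (x y : R -> R) (T : R) : 0 < T -> continuous x -> continuous y ->
  (forall t, x (t + T) = x t /\ y (t + T) = y t) ->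
  exists K : R, forall t, `|x t| <= K /\ `|y t| <= K.
Proof.
move=> Tp cx cy hp.
have dc := @dist_cont x y 0 0 cx cy.
have cw : {within `[0, T], continuous (fun t => `|x t - 0| + `|y t - 0|)}.
  exact: continuous_subspaceT.
have [t0 t0in hmax] := EVT_max (ltW Tp) cw.
exists (`|x t0 - 0| + `|y t0 - 0|) => t.
have [s sin [xs ys]] := per_red Tp hp t.
have := hmax s; rewrite in_itv /= => /(_ sin); rewrite !subr0 -xs -ys => h.
have := normr_ge0 (x t); have := normr_ge0 (y t); rewrite ?subr0; split; lra.
Qed.

Lemma curve_max (x y : R -> R) (T : R) : 0 < T -> continuous x ->
  (forall t, x (t + T) = x t /\ y (t + T) = y t) ->
  exists t0, forall t, x t <= x t0.
Proof.
move=> Tp cx hp.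
have cw : {within `[0, T], continuous x} by exact: continuous_subspaceT.
have [t0 t0in hmax] := EVT_max (ltW Tp) cw.
exists t0 => t; have [s sin [xs _]] := per_red Tp hp t.
by rewrite xs; apply: hmax; rewrite in_itv.
Qed.
End CurveB.
From HB Require Import structures.
From mathcomp Require Import all_boot all_order all_algebra.
From mathcomp Require Import all_classical all_reals all_analysis.
From mathcomp Require Import ring lra.
Import Order.TTheory GRing.Theory Num.Theory.
Import numFieldNormedType.Exports.
Local Open Scope classical_set_scope.
Local Open Scope ring_scope.
Set Implicit Arguments. Unset Strict Implicit. Unset Printing Implicit Defensive.
Section Acvg.
Variable R : realType.
Variables (T : Type) (F : set_system T) (FF : Filter F).

Lemma cvg_sumR (I : Type) (r : seq I) (P : pred I) (f : I -> T -> R) (a : I -> R) :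
  (forall i, f i x @[x --> F] --> a i) ->
  (\sum_(i <- r | P i) f i x) @[x --> F] --> \sum_(i <- r | P i) a i.
Proof.
move=> H; elim: r => [|i r IH].
  rewrite big_nil; under eq_cvg do rewrite big_nil; exact: cvg_cst.
rewrite big_cons; under eq_cvg do rewrite big_cons.
case: (P i) => //; exact: cvgD.
Qed.

Lemma cvg_prodR (I : Type) (r : seq I) (P : pred I) (f : I -> T -> R) (a : I -> R) :
  (forall i, f i x @[x --> F] --> a i) ->
  (\prod_(i <- r | P i) f i x) @[x --> F] --> \prod_(i <- r | P i) a i.
Proof.
move=> H; elim: r => [|i r IH].
  rewrite big_nil; under eq_cvg do rewrite big_nil; exact: cvg_cst.
rewrite big_cons; under eq_cvg do rewrite big_cons.
case: (P i) => //; exact: cvgM.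
Qed.

Lemma cvg_det n (M : T -> 'M[R]_n) (L : 'M[R]_n) :
  (forall i j, M x i j @[x --> F] --> L i j) ->
  \det (M x) @[x --> F] --> \det L.
Proof.
move=> H; rewrite /determinant.
apply: cvg_sumR => s; apply: cvgM; first exact: cvg_cst.
by apply: cvg_prodR => i; apply: H.
Qed.

Lemma cvg_invmx n (M : T -> 'M[R]_n) (L : 'M[R]_n) :
  \det L != 0 ->
  (forall i j, M x i j @[x --> F] --> L i j) ->
  forall i j, invmx (M x) i j @[x --> F] --> invmx L i j.
Proof.
move=> dL H i j.
have hd := cvg_det H.
have ev : \forall x \near F, \det (M x) != 0.
  exact: (cvgr_neq0 _ hd dL).
have Lu : L \in unitmx by rewrite unitmxE unitfE.
have -> : invmx L i j = (\det L)^-1 * cofactor L j i.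
  by rewrite /invmx Lu !mxE.
have Hc : forall (N : 'M[R]_n) , cofactor N j i = (-1) ^+ (j + i) * \det (row' j (col' i N)) by [].
have K : (fun x => (\det (M x))^-1 * cofactor (M x) j i) @ F --> (\det L)^-1 * cofactor L j i.
  apply: cvgM; first exact: cvgV.
  rewrite Hc; under eq_cvg do rewrite Hc.
  apply: cvgM; first exact: cvg_cst.
  apply: cvg_det => a b; rewrite !mxE; under eq_cvg do rewrite !mxE; exact: H.
apply: cvg_trans K; apply: near_eq_cvg.
near=> x; have : \det (M x) != 0 by near: x.
by move=> dx; rewrite /invmx unitmxE unitfE dx !mxE.
Unshelve. all: by end_near. Qed.
End Acvg.
Section Final.
Variable R : realType.

Lemma lor_det (g0 : 'M[R]_4) : lorentzian g0 -> \det g0 != 0.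
Proof.
move=> [_ [P [Pu hP]]]; apply/eqP => h0.
have := congr1 determinant hP; rewrite !det_mulmx det_tr h0 mulr0 mul0r.
rewrite /minkowski_diag det_diag !big_ord_recl big_ord0 !mxE /=.
move=> h; clear hP; lra.
Qed.
End Final.

Lemma Delta_cont (R : realType) (g : R -> R -> 'M[R]_4) (p : R * R) :
  (forall j k : 'I_4, smooth2 (fun r z => g r z j k)) -> \det (g p.1 p.2) != 0 ->
  Delta g q.1 q.2 @[q --> p] --> Delta g p.1 p.2.
Proof.
move=> hs hd; rewrite /Delta /ginv.
apply: cvg_det => i j; rewrite !mxE; under eq_cvg do rewrite !mxE.
apply: (@cvg_invmx R (R * R)%type (nbhs p) _ 4 (fun q : R * R => g q.1 q.2) (g p.1 p.2)) => // a b.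
have [S [Sf H]] := hs a b; have [c _] := H _ Sf; exact: c p.
Qed.

Theorem proposition2p2 (R : realType) (g : R -> R -> 'M[R]_4)
  (C C1 : set (R * R)) :
  (forall j k : 'I_4, smooth2 (fun r z => g r z j k)) ->
  (forall r z, g (- r) z = g r z) ->
  (forall r z, r != 0 -> lorentzian (g r z)) ->
  (* the ergosphere Delta = 0 is the smooth closed curve C *)
  smooth_closed_curve C ->
  (forall r z, r != 0 -> (Delta g r z = 0 <-> C (r, z))) ->
  (exists U : set (R * R), open U /\ C `<=` U /\
     forall r z, r != 0 -> U (r, z) ->
       (outside C (r, z) -> Delta g r z < 0) /\
       (inside C (r, z) -> 0 < Delta g r z)) ->
  (* the restricted ergosphere Delta_1 = 0 is the smooth closed curve C1 *)
  smooth_closed_curve C1 ->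
  (forall r z, r != 0 -> (Delta1 g r z = 0 <-> C1 (r, z))) ->
  (exists U : set (R * R), open U /\ C1 `<=` U /\
     forall r z, r != 0 -> U (r, z) ->
       (outside C1 (r, z) -> 0 < Delta1 g r z) /\
       (inside C1 (r, z) -> Delta1 g r z < 0)) ->
  forall r z, r != 0 -> Delta1 g r z = 0 -> C (r, z) \/ inside C (r, z).
Proof.
move=> hs hev hlor hC hDC [U [Uo [CU hU]]] _ _ _ r z rn h1.
have Dge : 0 <= Delta g r z by apply: Delta_ge0_of (hlor r z rn) h1.
have [d0|dn] := eqVneq (Delta g r z) 0; first by left; apply/(hDC _ _ rn).
have dp : 0 < Delta g r z by rewrite lt_neqAle eq_sym dn Dge.
right; split; first by move=> /(hDC _ _ rn) h; rewrite h eqxx in dn.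
move=> hout.
have hDeven : forall r z, Delta g (- r) z = Delta g r z by move=> a b; rewrite /Delta /ginv hev.
have hDcont : forall p : R * R, p.1 != 0 ->
    Delta g q.1 q.2 @[q --> p] --> Delta g p.1 p.2.
  move=> p pn; apply: Delta_cont => //; exact: lor_det (hlor _ _ pn).
case: hC => [x [y [T [Tp [sx [sy [hper [_ [_ hCe]]]]]]]]].
have cx := smooth_cont sx; have cy := smooth_cont sy.
have hCopen : forall p, ~ C p -> exists2 e, 0 < e &
    forall q : R * R, `|q.1 - p.1| < e -> `|q.2 - p.2| < e -> ~ C q.
  by rewrite hCe; exact: curve_open Tp cx cy hper.
have [Kb hKb] := curve_bound Tp cx cy hper.
have hK : forall p, C p -> `|p.1| <= Kb /\ `|p.2| <= Kb.
  by rewrite hCe => p [t ->]; exact: hKb.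
have [t0 ht0] := curve_max Tp cx hper.
have hcs : C (x t0, y t0) by rewrite hCe; exists t0.
have hmax : forall p, C p -> p.1 <= (x t0, y t0).1 by rewrite hCe => p [t ->]; exact: ht0.
have hcs0 : 0 <= (x t0, y t0).1.
  case: (ltrP (x 0) 0) => h0 /=; last exact: le_trans h0 (ht0 0).
  have C0 : C (x 0, y 0) by rewrite hCe; exists 0.
  have : C (- x 0, y 0).
    apply/(hDC _ _ _); first by rewrite oppr_eq0 ltr0_neq0.
    by rewrite hDeven; apply/(hDC _ _ (ltr0_neq0 h0)).
  move/hmax => /= h; lra.
have hUn : forall r z, r != 0 -> U (r, z) -> outside C (r, z) -> Delta g r z < 0.
  by move=> a b an aU ao; have [+ _] := hU a b an aU; apply.
exact: (outside_neg (D := Delta g) hDeven hDC hDcont hCopen hK hcs hmax hcs0 Uo CU hUn (p := (r, z)) rn hout dp).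
Qed.
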